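(* Let $k\ge 2$ and let $((G_n,S_n))_{n\ge1}$ be a sequence in $\mathcal M_k$ converging to $(G,S)$. Let (P) be one of the properties: (NA) being non-amenable; (Fr) containing a non-abelian free subgroup; (La) being large. If $G_n$ has (P) for all sufficiently large $n$, then every finitely presented group admitting an epimorphism onto $G$ has (P).
   Context: $\mathcal M_k$ is the set of pairs $(G,S)$ with $S$ an ordered $k$-tuple of generators of $G$, identified with normal subgroups of the free group $F_k$ (kernels of the induced epimorphism $F_k\to G$), with the topology in which $N_n\to N$ iff for every finite $K\subset F_k$, $N_n\cap K=N\cap K$ for large $n$. A group is large if it has a finite-index subgroup admitting an epimorphism onto a non-abelian free group. *)

(* Defs.v *)
From Stdlib Require Import Reals List Arith Classical ClassicalEpsilon.
From Stdlib Require Fin.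
Import ListNotations.
Set Implicit Arguments.
Unset Strict Implicit.

Record Group := {
  carrier :> Type;
  gmul : carrier -> carrier -> carrier;
  gone : carrier;
  ginv : carrier -> carrier;
  gassoc : forall x y z, gmul x (gmul y z) = gmul (gmul x y) z;
  gmul1l : forall x, gmul gone x = x;
  ginvl : forall x, gmul (ginv x) x = gone
}.
Arguments gmul {g} _ _.
Arguments gone {g}.
Arguments ginv {g} _.

Definition is_hom (G H : Group) (f : G -> H) : Prop :=
  forall x y, f (gmul x y) = gmul (f x) (f y).

Definition surjective (A B : Type) (f : A -> B) : Prop := forall y, exists x, f x = y.

(* ---------- Words over an alphabet X (letter, true = inverse letter) ---------- *)
Definition word (X : Type) := list (X * bool).

Definition letter_val (G : Group) (X : Type) (f : X -> G) (l : X * bool) : G :=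
  if snd l then ginv (f (fst l)) else f (fst l).

Definition eval (G : Group) (X : Type) (f : X -> G) (w : word X) : G :=
  fold_right (fun l acc => gmul (@letter_val G X f l) acc) gone w.

Definition winv (X : Type) (w : word X) : word X :=
  rev (map (fun l => (fst l, negb (snd l))) w).

Definition cancel_pair (X : Type) (a b : X * bool) : Prop :=
  fst a = fst b /\ snd a <> snd b.

Fixpoint reduced (X : Type) (w : word X) : Prop :=
  match w with
  | a :: ((b :: _) as t) => ~ cancel_pair a b /\ reduced t
  | _ => True
  end.

Fixpoint reduce (X : Type) (w : word X) : word X :=
  match w with
  | [] => []
  | a :: t =>
      match reduce t with
      | [] => [a]
      | b :: t' =>
          if excluded_middle_informative (cancel_pair a b) then t' else a :: b :: t'
      end
  end.
(* The free group F(X) is modelled as the set of reduced words over X with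
   product (u,v) |-> reduce (u ++ v). *)

Definition generates (G : Group) (X : Type) (S : X -> G) : Prop :=
  forall g : G, exists w : word X, eval S w = g.

(* (G_n,S_n) -> (G,S) in M_k: for every finite K of elements of F_k
   (represented by words), eventually N_n ∩ K = N ∩ K, where N_n, N are the
   kernels of F_k -> G_n, F_k -> G. *)
Definition marked_converges (k : nat) (Gs : nat -> Group)
    (Ss : forall n, Fin.t k -> Gs n) (G : Group) (S : Fin.t k -> G) : Prop :=
  forall K : list (word (Fin.t k)), exists n0, forall n, n0 <= n ->
    forall w, In w K -> (eval (Ss n) w = gone <-> eval S w = gone).

(* words representing elements of the normal closure of R in F(X) *)
Inductive consequence (X : Type) (R : list (word X)) : word X -> Prop :=
  | cons_nil : consequence R []
  | cons_rel r : In r R -> consequence R r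
  | cons_inv w : consequence R w -> consequence R (winv w)
  | cons_app u v : consequence R u -> consequence R v -> consequence R (u ++ v)
  | cons_conj u w : consequence R w -> consequence R (u ++ w ++ winv u)
  | cons_ins u v a b : cancel_pair a b -> consequence R (u ++ v) ->
      consequence R (u ++ a :: b :: v)
  | cons_del u v a b : cancel_pair a b -> consequence R (u ++ a :: b :: v) ->
      consequence R (u ++ v).

Definition finitely_presented (G : Group) : Prop :=
  exists (m : nat) (s : Fin.t m -> G) (R : list (word (Fin.t m))),
    generates s /\ forall w, eval s w = gone <-> consequence R w.

Definition amenable (G : Group) : Prop :=
  exists m : (G -> Prop) -> R,
    (forall A, (0 <= m A)%R) /\
    m (fun _ => True) = 1%R /\
    (forall A B, (forall x, A x -> B x -> False) ->
       m (fun x => A x \/ B x) = (m A + m B)%R) /\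
    (forall (g : G) A, m (fun x => A (gmul (ginv g) x)) = m A).

Definition non_amenable (G : Group) : Prop := ~ amenable G.

(* G contains a non-abelian free subgroup: a family f : X -> G, |X| >= 2,
   freely generating a subgroup (F(X) -> G injective). *)
Definition has_free_nonabelian_subgroup (G : Group) : Prop :=
  exists (X : Type) (x1 x2 : X) (f : X -> G), x1 <> x2 /\
    forall w : word X, reduced w -> w <> [] -> eval f w <> gone.

Definition is_subgroup (G : Group) (H : G -> Prop) : Prop :=
  H gone /\ (forall x y, H x -> H y -> H (gmul x y)) /\ (forall x, H x -> H (ginv x)).

Definition finite_index (G : Group) (H : G -> Prop) : Prop :=
  exists reps : list G, forall x : G, exists g, In g reps /\ H (gmul (ginv g) x).

Definition large (G : Group) : Prop :=
  exists (H : G -> Prop) (X : Type) (x1 x2 : X) (phi : G -> word X),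
    is_subgroup H /\ finite_index H /\ x1 <> x2 /\
    (forall x, H x -> reduced (phi x)) /\
    (forall x y, H x -> H y -> phi (gmul x y) = reduce (phi x ++ phi y)) /\
    (forall w, reduced w -> exists x, H x /\ phi x = w).

Inductive GProp := NA | Fr | La.

Definition has_prop (p : GProp) (G : Group) : Prop :=
  match p with
  | NA => non_amenable G
  | Fr => has_free_nonabelian_subgroup G
  | La => large G
  end.

(* Main.v *)
Require Import Defs.
From Stdlib Require Import Arith List Classical ClassicalEpsilon FunctionalExtensionality.
Import ListNotations.
Set Implicit Arguments.
Unset Strict Implicit.

Lemma mulrV (G : Group) (x : G) : gmul x (ginv x) = gone.
Proof.
  set (y := gmul x (ginv x)).
  assert (yy : gmul y y = y).
  { unfold y. rewrite <- gassoc, (gassoc (ginv x) x), ginvl, gmul1l. reflexivity. }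
  rewrite <- (gmul1l y), <- (ginvl y), <- gassoc, yy. reflexivity.
Qed.

Lemma mulr1 (G : Group) (x : G) : gmul x gone = x.
Proof. rewrite <- (ginvl x), gassoc, mulrV, gmul1l. reflexivity. Qed.

Lemma mul_cancel (G : Group) (x y z : G) : gmul x y = gmul x z -> y = z.
Proof.
  intro H. rewrite <- (gmul1l y), <- (gmul1l z), <- (ginvl x), <- !gassoc, H.
  reflexivity.
Qed.

Lemma inv_uniq (G : Group) (x y : G) : gmul x y = gone -> y = ginv x.
Proof. intro H. apply (mul_cancel (x:=x)). rewrite H, mulrV. reflexivity. Qed.

Lemma eq_of_mulV (G : Group) (x y : G) : gmul x (ginv y) = gone -> x = y.
Proof.
  intro H. rewrite <- (mulr1 x), <- (ginvl y), gassoc, H, gmul1l. reflexivity.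
Qed.

Lemma ginv_ginv (G : Group) (x : G) : ginv (ginv x) = x.
Proof. symmetry. apply inv_uniq. apply ginvl. Qed.

Lemma ginv_mul (G : Group) (x y : G) : ginv (gmul x y) = gmul (ginv y) (ginv x).
Proof.
  symmetry. apply inv_uniq. rewrite gassoc, <- (gassoc x y), mulrV, mulr1, mulrV.
  reflexivity.
Qed.

Lemma hom_one (G H : Group) (f : G -> H) : is_hom f -> f gone = gone.
Proof.
  intro hf. apply (mul_cancel (x:=f gone)). rewrite <- hf, gmul1l, mulr1. reflexivity.
Qed.

Lemma hom_inv (G H : Group) (f : G -> H) : is_hom f -> forall x, f (ginv x) = ginv (f x).
Proof.
  intros hf x. apply inv_uniq. rewrite <- hf, mulrV. apply hom_one; auto.
Qed.

Lemma eval_cons (G : Group) (X : Type) (f : X -> G) a w :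
  eval f (a :: w) = gmul (letter_val f a) (eval f w).
Proof. reflexivity. Qed.

Lemma eval_app (G : Group) (X : Type) (f : X -> G) u v :
  eval f (u ++ v) = gmul (eval f u) (eval f v).
Proof.
  induction u as [|a u IH]; simpl app.
  - simpl. rewrite gmul1l. reflexivity.
  - rewrite !eval_cons, IH, gassoc. reflexivity.
Qed.

Lemma eval_winv (G : Group) (X : Type) (f : X -> G) w :
  eval f (winv w) = ginv (eval f w).
Proof.
  induction w as [|a w IH].
  - simpl. apply inv_uniq. apply mulr1.
  - unfold winv in *. simpl map. simpl rev. rewrite eval_app, IH, eval_cons.
    simpl. rewrite mulr1, ginv_mul. f_equal.
    unfold letter_val. destruct a as [x b]; destruct b; simpl;
      [symmetry; apply ginv_ginv | reflexivity].
Qed.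

Lemma eval_hom (G H : Group) (X : Type) (h : G -> H) (f : X -> G) w :
  is_hom h -> eval (fun x => h (f x)) w = h (eval f w).
Proof.
  intro hh. induction w as [|a w IH].
  - simpl. symmetry. apply hom_one; auto.
  - rewrite !eval_cons, IH, hh. f_equal. unfold letter_val.
    destruct (snd a); [symmetry; apply hom_inv; auto | reflexivity].
Qed.

Lemma eval_ext (G : Group) (X : Type) (f g : X -> G) w :
  (forall x, f x = g x) -> eval f w = eval g w.
Proof. intro e. assert (E : f = g) by (apply functional_extensionality; exact e). rewrite E. reflexivity. Qed.

Definition subst (X Y : Type) (u : X -> word Y) (w : word X) : word Y :=
  flat_map (fun l : X * bool => if snd l then winv (u (fst l)) else u (fst l)) w.

Lemma eval_subst (G : Group) (X Y : Type) (g : Y -> G) (u : X -> word Y) w :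
  eval g (subst u w) = eval (fun i => eval g (u i)) w.
Proof.
  induction w as [|a w IH].
  - reflexivity.
  - unfold subst in *. simpl flat_map. rewrite eval_app, IH, eval_cons. f_equal.
    unfold letter_val. destruct (snd a); [apply eval_winv | reflexivity].
Qed.

Lemma cancel_val (G : Group) (X : Type) (t : X -> G) a b :
  cancel_pair a b -> gmul (letter_val t a) (letter_val t b) = gone.
Proof.
  destruct a as [x bx], b as [y bY]. intros [e ne]. simpl in *. subst y.
  unfold letter_val; simpl. destruct bx, bY; try (exfalso; apply ne; reflexivity).
  - apply ginvl.
  - apply mulrV.
Qed.

Lemma conseq_eval (G : Group) (X : Type) (t : X -> G) (R : list (word X)) w :
  (forall r, In r R -> eval t r = gone) -> consequence R w -> eval t w = gone.
Proof.
  intros HR c. induction c.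
  - reflexivity.
  - auto.
  - rewrite eval_winv, IHc. symmetry. apply inv_uniq. apply mulr1.
  - rewrite eval_app, IHc1, IHc2. apply mulr1.
  - rewrite !eval_app, IHc, gmul1l, eval_winv. apply mulrV.
  - rewrite eval_app, !eval_cons, (gassoc (letter_val t a)), cancel_val, gmul1l, <- eval_app; auto.
  - rewrite eval_app in *. rewrite !eval_cons, (gassoc (letter_val t a)), cancel_val, gmul1l in IHc; auto.
Qed.

Fixpoint fin_enum (k : nat) : list (Fin.t k) :=
  match k with
  | 0 => []
  | S k' => Fin.F1 :: map Fin.FS (fin_enum k')
  end.

Lemma fin_enum_in k (i : Fin.t k) : In i (fin_enum k).
Proof.
  induction i; simpl; [left; reflexivity | right; apply in_map; auto].
Qed.

Lemma transfer (p : GProp) (Gam H : Group) (psi : Gam -> H) :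
  is_hom psi -> surjective psi -> has_prop p H -> has_prop p Gam.
Proof.
  intros hh hs hp.
  pose (lift := fun y => proj1_sig (constructive_indefinite_description _ (hs y))).
  assert (Hlift : forall y, psi (lift y) = y).
  { intro y. unfold lift. destruct constructive_indefinite_description; auto. }
  destruct p; simpl in *.
  - intros [m [h0 [h1 [h2 h3]]]]. apply hp.
    exists (fun A => m (fun x => A (psi x))). repeat split.
    + intro A. apply h0.
    + exact h1.
    + intros A B d. apply h2. intros x; apply d.
    + intros g A. rewrite <- (h3 (lift g) (fun x => A (psi x))). f_equal.
      apply functional_extensionality. intro x.
      rewrite hh, hom_inv, Hlift; auto.
  - destruct hp as [X [x1 [x2 [fx [ne hf]]]]].
    exists X, x1, x2, (fun x => lift (fx x)). split; auto.
    intros w r nn e. apply (hf w r nn).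
    rewrite (eval_ext (f := fx) (g := fun x => psi (lift (fx x)))).
    + rewrite eval_hom, e; auto. apply hom_one; auto.
    + intro x. rewrite Hlift. reflexivity.
  - destruct hp as [Hs [X [x1 [x2 [phi [[s1 [s2 s3]] [[reps fi] [ne [r1 [r2 r3]]]]]]]]]].
    exists (fun x => Hs (psi x)), X, x1, x2, (fun x => phi (psi x)).
    repeat split.
    + rewrite hom_one; auto.
    + intros x y a b. rewrite hh. auto.
    + intros x a. rewrite hom_inv; auto.
    + exists (map lift reps). intro x. destruct (fi (psi x)) as [g [ig hg]].
      exists (lift g). split; [apply in_map; auto|].
      rewrite hh, hom_inv, Hlift; auto.
    + exact ne.
    + intros x a; auto.
    + intros x y a b. rewrite hh. auto.
    + intros w rw. destruct (r3 w rw) as [y [hy e]].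
      exists (lift y). rewrite Hlift. auto.
Qed.

Theorem mainTheorem6 (p : GProp) (k : nat) (hk : 2 <= k)
    (Gs : nat -> Group) (Ss : forall n, Fin.t k -> Gs n)
    (G : Group) (S : Fin.t k -> G)
    (hSs : forall n, generates (Ss n)) (hS : generates S)
    (hconv : @marked_converges k Gs Ss G S)
    (hP : exists n0, forall n, n0 <= n -> has_prop p (Gs n)) :
  forall (Gam : Group) (f : Gam -> G),
    finitely_presented Gam -> is_hom f -> surjective f -> has_prop p Gam.
Proof.
  intros Gam f [m [s [Rl [gens pres]]]] fhom fsurj.
  pose (u := fun i : Fin.t m => proj1_sig (constructive_indefinite_description _ (hS (f (s i))))).
  assert (Hu : forall i, eval S (u i) = f (s i)).
  { intro i. unfold u. destruct constructive_indefinite_description; auto. }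
  assert (ex_v : forall j : Fin.t k, exists w, f (eval s w) = S j).
  { intro j. destruct (fsurj (S j)) as [g hg]. destruct (gens g) as [w hw].
    exists w. rewrite hw; auto. }
  pose (v := fun j => proj1_sig (constructive_indefinite_description _ (ex_v j))).
  assert (Hv : forall j, f (eval s (v j)) = S j).
  { intro j. unfold v. destruct constructive_indefinite_description; auto. }
  destruct (hconv (map (subst u) Rl ++ map (fun j => subst u (v j) ++ [(j, true)]) (fin_enum k)))
    as [n1 Hn1].
  destruct hP as [n0 Hn0].
  set (n := max n0 n1).
  assert (Hn : n1 <= n) by (unfold n; apply Nat.le_max_r).
  pose (t := fun i => eval (Ss n) (u i)).
  assert (HR : forall r, In r Rl -> eval t r = gone) by (
    intros r ir; unfold t; rewrite <- eval_subst;
    apply (Hn1 n Hn); [apply in_or_app; left; apply in_map; auto|];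
    rewrite eval_subst, (eval_ext (g := fun i => f (s i))), eval_hom; auto;
    rewrite (proj2 (pres r)); [apply hom_one; auto | apply cons_rel; auto]).
  assert (HV : forall j, eval t (v j) = Ss n j) by (
    intro j; apply eq_of_mulV; rewrite <- (mulr1 (ginv (Ss n j)));
    unfold t; rewrite <- eval_subst;
    change (gmul (ginv (Ss n j)) gone) with (eval (Ss n) [(j,true)]);
    rewrite <- eval_app;
    apply (Hn1 n Hn); [apply in_or_app; right;
                       apply (in_map (fun j => subst u (v j) ++ [(j, true)])); apply fin_enum_in|];
    rewrite eval_app, eval_subst, (eval_ext (g := fun i => f (s i))), eval_hom, Hv; auto;
    simpl; rewrite mulr1; apply mulrV).
  pose (psi := fun g => eval t (proj1_sig (constructive_indefinite_description _ (gens g)))).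
  assert (Hpsi : forall w, eval t w = psi (eval s w)) by (
    intro w; unfold psi; destruct constructive_indefinite_description as [w' hw']; simpl;
    apply eq_of_mulV; rewrite <- eval_winv, <- eval_app;
    apply (conseq_eval HR); apply pres; rewrite eval_app, eval_winv, hw'; apply mulrV).
  assert (hh : is_hom psi).
  { intros x y. destruct (gens x) as [wx <-]. destruct (gens y) as [wy <-].
    rewrite <- eval_app, <- !Hpsi, eval_app. reflexivity. }
  apply (transfer (psi := psi)); [exact hh | | apply Hn0; unfold n; apply Nat.le_max_l].
  - intro y. destruct (hSs n y) as [w <-].
    exists (eval (fun j => eval s (v j)) w).
    rewrite <- (eval_hom (h := psi)); auto. apply eval_ext.
    intro j. rewrite <- Hpsi. apply HV.
Qed.
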